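(* Let $n\ge2$, $\alpha\in\mathbb C$, and $T=I+\alpha D\in\mathcal L(\mathcal P_n)$. Let $f\in\mathcal P_n$ have degree at least $2$ and simple roots, and suppose $\tau(f)>2|\alpha|(n-1)+1$. Then $$Z(Tf)\subset\{-\alpha\}+Z(f)+\mathbb D\bigl(\gamma_\alpha/\tau(f)\bigr),$$ where $$\gamma_\alpha=2n\bigl(|\alpha|(n-1)+1\bigr)\left(\Bigl(\frac{|\alpha|(n-1)+2}{|\alpha|(n-1)+1}\Bigr)^{n-1}-1\right)\max\Bigl\{|\alpha|^k\Bigl(1-\frac1k\Bigr):k=2,\dots,n\Bigr\}.$$
   Context: $\mathcal P_n$ is the complex vector space of polynomials of degree at most $n$, $D$ the differentiation operator, $I$ the identity. $Z(f)$ is the root set of $f$; $\mathbb D(r)=\{z\in\mathbb C:|z|\le r\}$ and $A+B=\{u+v:u\in A,v\in B\}$. For $f$ of degree $\ge2$ with at least two distinct roots, $\tau(f):=\min\{|w-v|:w\in Z(f),\ v\in Z(f')\setminus\{w\}\}$. *)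

(* Defs.v *)
From HB Require Import structures.
From mathcomp Require Import all_boot all_order all_algebra.
Set Implicit Arguments. Unset Strict Implicit. Unset Printing Implicit Defensive.
Import Order.TTheory GRing.Theory Num.Theory.
Local Open Scope ring_scope.

Definition simple_roots (C : numClosedFieldType) (f : {poly C}) : Prop :=
  forall z, root f z -> ~~ root f^`() z.

Definition is_tau (C : numClosedFieldType) (f : {poly C}) (t : C) : Prop :=
  (exists w v, [/\ root f w, root f^`() v, v != w & t = `|w - v|]) /\
  (forall w v, root f w -> root f^`() v -> v != w -> t <= `|w - v|).

Definition Top (C : numClosedFieldType) (alpha : C) (f : {poly C}) : {poly C} :=
  f + alpha *: f^`().

Definition gamma (C : numClosedFieldType) (n : nat) (alpha : C) : C :=
  let a := `|alpha| in
  let A := a * (n.-1)%:R + 1 in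
  2 * n%:R * A * (((A + 1) / A) ^+ n.-1 - 1) *
  \big[Order.max/0]_(2 <= k < n.+1) (a ^+ k * (1 - (k%:R)^-1)).

(* Main.v *)
Require Import Defs.
From HB Require Import structures.
From mathcomp Require Import all_boot all_order all_algebra.
Import Order.TTheory GRing.Theory Num.Theory.
Local Open Scope ring_scope.

Section Aux.
Variable C : numClosedFieldType.

Lemma coef0_prodXg (I : Type) (s : seq I) (g : I -> C) :
  (\prod_(w <- s) ('X + (g w)%:P))`_0 = \prod_(w <- s) g w.
Proof.
elim: s => [|w s IH]; first by rewrite !big_nil coefC.
by rewrite !big_cons coef0M IH coefD coefX coefC add0r.
Qed.

Lemma coef_prodXg (I : eqType) (s : seq I) (g : I -> C) (r : C) :
  0 < r -> (forall w, w \in s -> r <= `|g w|) -> forall i,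
  `|(\prod_(w <- s) ('X + (g w)%:P))`_i| * r ^+ i <=
     (\prod_(w <- s) `|g w|) * ('C(size s, i))%:R.
Proof.
move=> r0; elim: s => [|w s IH] Hs i.
  rewrite !big_nil coefC /= bin0n; case: i => [|i] /=.
    by rewrite expr0 normr1 !mulr1.
  by rewrite normr0 !mul0r mulr0.
have IH' := IH (fun x xs => Hs x (@mem_behead _ (w :: s) x xs)).
have Hw : r <= `|g w| by apply: Hs; rewrite mem_head.
rewrite !big_cons mulrDl coefD coefXM coefCM.
case: i => [|i] /=.
  rewrite bin0 expr0 !mulr1 add0r normrM ler_wpM2l //.
  by have := IH' 0%N; rewrite expr0 bin0 !mulr1.
rewrite binS natrD mulrDr.
set P := \prod_(j <- s) _.
set Q := \prod_(j <- s) _.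
have r0' : 0 <= r by apply: ltW.
apply: le_trans (ler_wpM2r (exprn_ge0 _ r0') (ler_normD _ _)) _.
rewrite mulrDl addrC; apply: lerD.
  by rewrite normrM -!mulrA ler_wpM2l //; apply: IH'.
apply: (@le_trans _ _ ((Q * 'C(size s, i)%:R) * r)).
  by rewrite exprSr mulrA; apply: ler_wpM2r => //; apply: IH'.
rewrite [X in X <= _]mulrC -!mulrA ler_wpM2r //.
by apply: mulr_ge0; [exact: prodr_ge0|exact: ler0n].
Qed.

Lemma apriori_id (d : nat) (x : C) :
  \sum_(i < d.+1) (i%:R * ('C(d.+1, i.+1))%:R * x ^+ i.+1) =
  1 + (x + 1) ^+ d * (d%:R * x - 1).
Proof.
have E1 : forall i : nat, i%:R * ('C(d.+1, i.+1))%:R =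
    d.+1%:R * ('C(d, i))%:R - ('C(d.+1, i.+1))%:R :> C.
  move=> i; rewrite -natrM -[in RHS]natrM.
  have := mul_bin_diag d.+1 i => /= ->.
  by rewrite mulSn natrD addrAC subrr add0r.
under eq_bigr do rewrite E1 mulrBl.
rewrite sumrB.
have -> : \sum_(i < d.+1) (d.+1%:R * ('C(d, i))%:R * x ^+ i.+1)
          = d.+1%:R * x * (x + 1) ^+ d.
  rewrite exprD1n mulr_sumr; apply: eq_bigr => i _.
  rewrite exprS -!mulrA -[x ^+ i *+ _]mulr_natr mulrCA mulrCA; congr (_ * _); by rewrite mulrC -mulrA.
have -> : \sum_(i < d.+1) (('C(d.+1, i.+1))%:R * x ^+ i.+1)
          = (x + 1) ^+ d.+1 - 1.
  rewrite exprD1n [in RHS]big_ord_recl /= expr0 bin0 mulr1n addrC addKr.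
  by apply: eq_bigr => i _; rewrite mulr_natl.
rewrite exprS -addn1 natrD mulrDl mul1r.
by rewrite opprB addrCA -mulrBl opprD addrA addrK mulrC.
Qed.

Lemma apriori (d : nat) (x : C) : 0 <= x ->
  1 <= \sum_(i < d.+1) (i%:R * ('C(d.+1, i.+1))%:R * x ^+ i.+1) ->
  1 <= d%:R * x.
Proof.
move=> x0; rewrite apriori_id => H.
have xr : x \is Num.real by apply: ger0_real.
have dxr : d%:R * x \is Num.real by rewrite realM // realn.
rewrite real_leNgt ?real1 //; apply/negP => lt1.
have P0 : 0 < (x + 1) ^+ d by apply: exprn_gt0; apply: ltr_wpDl.
have : (x + 1) ^+ d * (d%:R * x - 1) < 0.
  by rewrite pmulr_rlt0 // subr_lt0.
rewrite -(ltrD2l 1) addr0 => H2.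
by have := le_lt_trans H H2; rewrite ltxx.
Qed.

Lemma exists_min (s : seq C) (u : C) : s != [::] ->
  exists2 w, w \in s & forall y, y \in s -> `|u - w| <= `|u - y|.
Proof.
elim: s => [//|x s IH] _.
have [->|sn] := eqVneq s [::].
  by exists x; rewrite ?mem_head // => y; rewrite inE => /eqP ->.
have [w ws Hw] := IH sn.
have [le|lt] := real_leP (normr_real (u - x)) (normr_real (u - w)).
  exists x; first by rewrite mem_head.
  move=> y; rewrite inE => /orP [/eqP ->//|ys].
  exact: le_trans le (Hw y ys).
exists w; first by rewrite inE ws orbT.
move=> y; rewrite inE => /orP [/eqP ->|ys]; last exact: Hw.
exact: ltW.
Qed.

Lemma bigmax_seq (I : eqType) (r : seq I) (F : I -> C) :
  (forall k, 0 <= F k) ->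
  0 <= \big[Order.max/0]_(k <- r) F k /\
  forall k, k \in r -> F k <= \big[Order.max/0]_(k <- r) F k.
Proof.
move=> F0; elim: r => [|x r [IH1 IH2]]; first by rewrite big_nil.
rewrite big_cons.
have cmp : (F x >=< \big[Order.max/0]_(k <- r) F k)%O.
  by apply: real_comparable; apply: ger0_real.
split; first by rewrite comparable_le_max // F0.
move=> k; rewrite inE => /orP [/eqP ->|kr].
  by rewrite comparable_le_max // lexx.
by rewrite comparable_le_max // IH2 ?orbT.
Qed.

Lemma final_num (N : nat) (a t r : C) : 0 <= a ->
  2 * a * N%:R + 1 < t -> t - N%:R * a <= r ->
  t * \sum_(i < N) (('C(N, i.+1))%:R / r ^+ i.+1) <=
  2 * (a * N%:R + 1) * ((((a * N%:R + 1) + 1) / (a * N%:R + 1)) ^+ N - 1).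
Proof.
move=> a0 Ht Hr.
set A := a * N%:R + 1.
have A1 : 1 <= A by rewrite /A lerDr mulr_ge0.
have A0 : 0 < A by apply: lt_le_trans A1.
have Ar : A <= r.
  apply: le_trans Hr; rewrite /A lerBrDr.
  apply: ltW; apply: le_lt_trans Ht.
  rewrite /A [N%:R * a]mulrC addrAC -mulr2n -mulrA mulr_natl.
  by [].
have r0 : 0 < r by apply: lt_le_trans Ar.
have tr : t <= 2 * r.
  apply: le_trans (ler_wpM2l _ Hr); last by [].
  rewrite mulrBr lerBrDr (mulr_natl t 2) mulr2n lerD2l.
  apply: ltW; apply: le_lt_trans Ht.
  by rewrite ler_wpDr // -mulrA [N%:R * a]mulrC.
have -> : (A + 1) / A = A^-1 + 1.
  rewrite mulrDl divff ?mul1r; first by rewrite addrC. by apply: lt0r_neq0.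
rewrite exprD1n big_ord_recl expr0 bin0 mulr1n addrC addKr.
rewrite mulr_sumr mulr_sumr; apply: ler_sum => i _.
have -> : (lift ord0 i : nat) = i.+1 by [].
set c : C := ('C(N, i.+1))%:R.
have c0 : 0 <= c by apply: ler0n.
have rn0 : r != 0 by apply: lt0r_neq0.
have An0 : A != 0 by apply: lt0r_neq0.
apply: le_trans (ler_wpM2r _ tr) _.
  by apply: divr_ge0 => //; apply: exprn_ge0; apply: ltW.
have -> : 2 * r * (c / r ^+ i.+1) = 2 * c * (r ^+ i)^-1.
  rewrite exprSr invfM mulrA -[2 * r * c]mulrA [r * c]mulrC !mulrA.
  by rewrite mulrAC mulfK.
rewrite [X in _ <= X](_ : _ = 2 * c * (A ^+ i)^-1); last first.
  rewrite -[_ *+ 'C(_,_)]mulr_natr -/c exprSr [A^-1 ^+ i * _]mulrC -mulrA -mulrA.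
  rewrite -[A^-1 * _ * c]mulrA mulVKf // exprVn.
  by rewrite [A ^- i * c]mulrC.
apply: ler_wpM2l; first by apply: mulr_ge0.
rewrite lef_pV2 ?posrE ?exprn_gt0 //.
by rewrite lerXn2r // nnegrE ltW.
Qed.


Lemma comp_prodXsub (s : seq C) (u : C) :
  (\prod_(w <- s) ('X - w%:P)) \Po ('X + u%:P) =
  \prod_(w <- s) ('X + (u - w)%:P).
Proof.
elim: s => [|w s IH]; first by rewrite !big_nil -polyC1 comp_polyC.
rewrite !big_cons comp_polyM IH comp_polyB comp_polyX comp_polyC.
by rewrite polyCB addrA.
Qed.

End Aux.

Theorem corollary3p3 (C : numClosedFieldType) (n : nat) (alpha : C)
  (f : {poly C}) (t : C) :
  (2 <= n)%N ->
  (size f <= n.+1)%N ->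
  (3 <= size f)%N ->
  simple_roots f ->
  is_tau f t ->
  2 * `|alpha| * (n.-1)%:R + 1 < t ->
  forall z, root (Top alpha f) z ->
    exists w, root f w /\ `|z - (- alpha + w)| <= gamma n alpha / t.
Proof.
move=> n2 szn sz3 simple [_ tmin] Ht z rootz.
set a := `|alpha|.
have a0 : 0 <= a := normr_ge0 _.
set N := n.-1.
have Na0 : 0 <= N%:R * a by apply: mulr_ge0.
have tNa : N%:R * a < t.
  apply: le_lt_trans Ht.
  have e2 : 2 * a * N%:R = N%:R * a + N%:R * a.
    by rewrite -mulr2n -mulrA mulr_natl [a * _]mulrC.
  by rewrite e2 -addrA lerDl addr_ge0.
have t0 : 0 < t by apply: le_lt_trans tNa.
set A := a * N%:R + 1.
set M := \big[Order.max/0]_(2 <= k < n.+1) (a ^+ k * (1 - (k%:R)^-1)).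
have [M0 HM] : 0 <= M /\ forall k, (2 <= k < n.+1)%N ->
    a ^+ k * (1 - (k%:R)^-1) <= M.
  have F0 : forall k : nat, 0 <= a ^+ k * (1 - (k%:R)^-1).
    move=> k; apply: mulr_ge0; first exact: exprn_ge0.
    case: k => [|k]; first by rewrite invr0 subr0.
    by rewrite subr_ge0 invf_le1 ?ltr0Sn // ler1n.
  have [H1 H2] := @bigmax_seq C _ (index_iota 2 n.+1) _ F0.
  split => // k Hk; apply: H2; by rewrite mem_index_iota.
have Hgam : gamma n alpha = 2 * n%:R * A * (((A + 1) / A) ^+ N - 1) * M by [].
have A1 : 1 <= A by rewrite /A lerDr mulr_ge0.
have A0 : 0 < A by apply: lt_le_trans A1.
have gam0 : 0 <= gamma n alpha.
  rewrite Hgam; apply: mulr_ge0 => //; apply: mulr_ge0; last first.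
    rewrite subr_ge0 exprn_ege1 // ler_pdivlMr // mul1r.
    by rewrite lerDl.
  by apply: mulr_ge0; [apply: mulr_ge0 => //|apply: ltW].
have fn0 : f != 0 by rewrite -size_poly_eq0 -lt0n (ltn_trans _ sz3).
have [rs Hf] := closed_field_poly_normal f.
set lc := lead_coef f.
have lc0 : lc != 0 by rewrite lead_coef_eq0.
set d := size rs.
have szf : size f = d.+1 by rewrite Hf size_scale // size_prod_XsubC.
have d2 : (2 <= d)%N by rewrite -ltnS -szf.
have dn : (d <= n)%N by rewrite -ltnS -szf.
have rootf : forall x, root f x = (x \in rs).
  by move=> x; rewrite Hf rootZ // root_prod_XsubC.
have f'n0 : f^`() != 0.
  apply/eqP => H; have := congr1 (fun p : {poly C} => p`_d.-1) H.
  rewrite coef_deriv coef0 prednK ?(ltn_trans _ d2) //.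
  have -> : f`_d = lc by rewrite /lc lead_coefE szf.
  by move/eqP; rewrite mulrn_eq0 (negbTE lc0) orbF; case: (d) d2.
have [vs Hf'] := closed_field_poly_normal f^`().
set lc' := lead_coef f^`().
have lc'0 : lc' != 0 by rewrite lead_coef_eq0.
have szf' : size f^`() = (size vs).+1.
  by rewrite Hf' size_scale // size_prod_XsubC.
have mN : (size vs <= N)%N.
  have := lt_size_deriv fn0; rewrite szf' szf ltnS => H.
  have H2 := leq_trans H dn; rewrite /N.
  by move: H2; case: (n).
have rootf' : forall x, root f^`() x = (x \in vs).
  by move=> x; rewrite Hf' rootZ // root_prod_XsubC.
have Hz : f.[z] + alpha * f^`().[z] = 0.
  by move: rootz; rewrite /root /Top hornerD hornerZ => /eqP.
set u := z + alpha.
have zu : - alpha + u = z by rewrite /u addrCA addNr addr0.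
have [fu0|fun0] := eqVneq f.[u] 0.
  exists u; split; first by rewrite /root fu0.
  rewrite /u addrCA addNr addr0 subrr normr0.
  by apply: divr_ge0 => //; apply: ltW.
have rs0 : rs != [::] by apply/eqP => H; move: d2; rewrite /d H.
have [w0 w0in Hmin] := @exists_min C rs u rs0.
set dl := `|u - w0|.
have rw0 : root f w0 by rewrite rootf.
have dl0 : 0 < dl.
  rewrite normr_gt0 subr_eq0; apply/eqP => E.
  by move: rw0; rewrite -E /root (negbTE fun0).
set F := f \Po ('X + u%:P).
have HF : F = lc *: \prod_(w <- rs) ('X + (u - w)%:P).
  by rewrite /F {1}Hf comp_polyZ comp_prodXsub.
have F0 : F`_0 = f.[u].
  by rewrite -horner_coef0 /F horner_comp hornerD hornerX hornerC add0r.
have HF0 : `|F`_0| = `|lc| * \prod_(w <- rs) `|u - w|.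
  by rewrite HF coefZ coef0_prodXg normrM normr_prod.
have HFk : forall k, `|F`_k| * dl ^+ k <= `|F`_0| * ('C(d, k))%:R.
  move=> k; rewrite HF0 HF coefZ normrM -mulrA -mulrA ler_wpM2l //.
  by apply: coef_prodXg => // w win; exact: Hmin.
have szF : (size F <= d.+1)%N.
  apply/leq_sizeP => j hj; have := HFk j; rewrite bin_small // mulr0.
  by rewrite pmulr_lle0 ?exprn_gt0 // normr_le0 => /eqP.
set G := f^`() \Po ('X + u%:P).
have HGd : G = F^`() by rewrite /F deriv_comp derivD derivX derivC addr0 mulr1.
have HG : G = lc' *: \prod_(v <- vs) ('X + (u - v)%:P).
  by rewrite /G {1}Hf' comp_polyZ comp_prodXsub.
have Gd0 : G`_d = 0.
  by rewrite HGd coef_deriv; move/leq_sizeP: szF => -> //; rewrite mul0rn.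
have szG : (size G <= d.+1)%N.
  apply/leq_sizeP => j hj; rewrite HGd coef_deriv.
  by move/leq_sizeP: szF => -> //; rewrite ?mul0rn // (leq_trans hj).
have Hsum : F.[- alpha] + alpha * G.[- alpha] = 0.
  by rewrite /F /G !horner_comp hornerD hornerX hornerC zu.
have E1 : alpha * G.[- alpha] =
    - \sum_(i < d) (i.+1%:R * F`_i.+1 * (- alpha) ^+ i.+1).
  rewrite (horner_coef_wide _ szG) big_ord_recr /= Gd0 mul0r addr0.
  rewrite mulr_sumr -sumrN; apply: eq_bigr => i _.
  rewrite HGd coef_deriv exprS -[F`_i.+1 *+ _]mulr_natl mulNr mulrN opprK.
  by rewrite mulrCA.
have E2 : F.[- alpha] = F`_0 + \sum_(i < d) (F`_i.+1 * (- alpha) ^+ i.+1).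
  by rewrite (horner_coef_wide _ szF) big_ord_recl expr0 mulr1.
have Hid : F`_0 = \sum_(i < d) (i%:R * F`_i.+1 * (- alpha) ^+ i.+1).
  move/eqP: Hsum; rewrite E2 E1 -addrA addr_eq0 => /eqP ->.
  rewrite opprB -sumrB; apply: eq_bigr => i _.
  by rewrite -!mulrA -addn1 natrD mulrDl mul1r addrK.
have HB1 : `|F`_0| <= \sum_(i < d) (i%:R * `|F`_i.+1| * a ^+ i.+1).
  rewrite {1}Hid; apply: le_trans (ler_norm_sum _ _ _) _.
  apply: ler_sum => i _; rewrite !normrM normrX normrN normr_nat.
  by [].
have F0pos : 0 < `|F`_0| by rewrite normr_gt0 F0.
have Fk : forall k, `|F`_k| <= `|F`_0| * ('C(d, k))%:R / dl ^+ k.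
  by move=> k; rewrite ler_pdivlMr ?exprn_gt0 //; apply: HFk.
have [d' dE] : exists d', d = d'.+1 by exists d.-1; rewrite prednK // (ltn_trans _ d2).
have hdl : dl <= N%:R * a.
  have H1 : 1 <= \sum_(i < d) (i%:R * ('C(d, i.+1))%:R * (a / dl) ^+ i.+1).
    rewrite -(ler_pM2l F0pos) mulr1 mulr_sumr; apply: le_trans HB1 _.
    apply: ler_sum => i _.
    apply: (@le_trans _ _ (i%:R * (`|F`_0| * ('C(d, i.+1))%:R / dl ^+ i.+1) * a ^+ i.+1)).
      apply: ler_wpM2r; first exact: exprn_ge0.
      by apply: ler_wpM2l => //; apply: Fk.
    rewrite expr_div_n !mulrA -!mulrA.
    by rewrite mulrCA [dl ^- _ * _]mulrC.
  move: H1; rewrite dE => H1.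
  have := @apriori C d' (a / dl) (divr_ge0 a0 (ltW dl0)) H1.
  rewrite mulrA ler_pdivlMr // mul1r => H2; apply: le_trans H2 _.
  apply: ler_wpM2r => //; rewrite ler_nat /N.
  by move: dn; rewrite dE; case: (n).
set r := t - dl.
have hr1 : t - N%:R * a <= r by apply: lerB.
have r0 : 0 < r by apply: lt_le_trans hr1; rewrite subr_gt0.
have Hcrit : forall v, v \in vs -> r <= `|u - v|.
  move=> v vin.
  have vw : v != w0.
    apply/eqP => E; have := simple w0 rw0; rewrite rootf' -E vin.
    by [].
  have tv := tmin w0 v rw0 (etrans (rootf' v) vin) vw.
  rewrite /r lerBlDl; apply: le_trans tv _.
  by apply: le_trans (ler_distD u _ _) _; rewrite [`|w0 - u|]distrC.
have HG0 : `|G`_0| = `|lc'| * \prod_(v <- vs) `|u - v|.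
  by rewrite HG coefZ coef0_prodXg normrM normr_prod.
have HGk : forall k, `|G`_k| * r ^+ k <= `|G`_0| * ('C(size vs, k))%:R.
  move=> k; rewrite HG0 HG coefZ normrM -mulrA -mulrA ler_wpM2l //.
  by apply: coef_prodXg => // v vin; exact: Hcrit.
have G0F1 : G`_0 = F`_1 by rewrite HGd coef_deriv mulr1n.
have HF1 : `|F`_1| * dl <= `|F`_0| * d%:R by have := HFk 1%N; rewrite expr1 bin1.
set S := \sum_(i < N) (('C(N, i.+1))%:R / r ^+ i.+1).
pose h := fun i : nat => if i == 0%N then 0 else ('C(N, i))%:R / r ^+ i.
have h0 : forall i, 0 <= h i.
  move=> i; rewrite /h; case: (i == 0%N) => //.
  by apply: divr_ge0 => //; apply: exprn_ge0; apply: ltW.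
have HB2 : `|F`_0| <= `|G`_0| * (M * \sum_(i < d) h i).
  apply: le_trans HB1 _; rewrite mulr_sumr mulr_sumr; apply: ler_sum.
  case=> [[|j] ji] _ /=.
    by rewrite /h /= !mul0r !mulr0.
  have eqF : `|G`_j.+1| = j.+2%:R * `|F`_j.+2|.
    by rewrite HGd coef_deriv normrMn mulr_natl.
  have k0 : (j.+2%:R : C) != 0 by rewrite pnatr_eq0.
  have e1 : j.+1%:R * `|F`_j.+2| * a ^+ j.+2 =
      (a ^+ j.+2 * (1 - (j.+2%:R)^-1)) * `|G`_j.+1|.
    rewrite eqF mulrA -[_ * (1 - _) * _]mulrA mulrBl mul1r mulVf //.
    have -> : (j.+2%:R : C) - 1 = j.+1%:R by rewrite -addn1 natrD addrK.
    by rewrite mulrC mulrA.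
  rewrite e1 /h /=.
  have HMj : a ^+ j.+2 * (1 - (j.+2%:R)^-1) <= M.
    by apply: HM; rewrite /= ltnS (leq_trans ji dn).
  have HGj : `|G`_j.+1| <= `|G`_0| * ('C(N, j.+1))%:R / r ^+ j.+1.
    rewrite ler_pdivlMr ?exprn_gt0 //; apply: le_trans (HGk _) _.
    by apply: ler_wpM2l => //; rewrite ler_nat leq_bin2l.
  apply: le_trans (ler_wpM2r (normr_ge0 _) HMj) _.
  rewrite mulrCA; apply: ler_wpM2l => //.
  by rewrite mulrA.
have dN1 : (d <= N.+1)%N by rewrite /N prednK ?(ltn_trans _ n2).
have hS : \sum_(i < d) h i <= S.
  rewrite (big_ord_widen N.+1 h dN1) big_mkcond /=.
  apply: (@le_trans _ _ (\sum_(i < N.+1) h i)).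
    by apply: ler_sum => i _; case: ifP => _ //.
  rewrite big_ord_recl /h /= add0r.
  by apply: lexx.
have S0 : 0 <= S.
  by apply: sumr_ge0 => i _; apply: divr_ge0 => //; apply: exprn_ge0; apply: ltW.
have hdl2 : dl <= d%:R * (M * S).
  have H3 : `|F`_0| <= `|F`_1| * (M * S).
    rewrite -G0F1; apply: le_trans HB2 _; apply: ler_wpM2l => //.
    by apply: ler_wpM2l.
  rewrite -(ler_pM2l F0pos); apply: le_trans (ler_wpM2r (ltW dl0) H3) _.
  rewrite mulrAC; apply: le_trans (ler_wpM2r (mulr_ge0 M0 S0) HF1) _.
  by rewrite -mulrA.
exists w0; split => //.
have -> : z - (- alpha + w0) = u - w0 by rewrite /u opprD opprK addrA.
rewrite -/dl ler_pdivlMr //.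
have HfN := @final_num C N a t r a0 Ht hr1.
apply: le_trans (ler_wpM2r (ltW t0) hdl2) _.
apply: (@le_trans _ _ (n%:R * (M * S) * t)).
  apply: ler_wpM2r; first exact: ltW.
  by apply: ler_wpM2r; [apply: mulr_ge0|rewrite ler_nat].
rewrite Hgam -!mulrA.
rewrite [S * t]mulrC.
apply: le_trans (ler_wpM2l (ler0n _ _) (ler_wpM2l M0 HfN)) _.
rewrite -/A [X in _ <= X]mulrCA; apply: ler_wpM2l => //.
by rewrite [X in X <= _]mulrC -!mulrA.
Qed.
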